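(* Let $\Gamma$ be a finitely generated group with exactly $2$ ends, and let $S$ be any finite generating set of $\Gamma$ not containing the identity. Then the Cayley graph $G=\mathrm{Cay}(\Gamma,S)$ has a periodic proper vertex-coloring with $\chi(G)$ colors.
   Context: The Cayley graph $\mathrm{Cay}(\Gamma,S)$ has vertex set $\Gamma$, with $g,h$ adjacent iff $hg^{-1}\in S\cup S^{-1}$. The number of ends of a finitely generated group is the number of ends of any of its Cayley graphs with respect to finite generating sets (ends: equivalence classes of rays, two rays being equivalent if there are infinitely many disjoint paths between them). $\chi(G)$ is the chromatic number. A vertex-coloring of $G$ is periodic if the subgroup of automorphisms of $G$ mapping every vertex to a vertex of the same color has finitely many orbits on $V(G)$. *)

(* Defs.v *)
From Stdlib Require Import List Arith.
Import ListNotations.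

Record group := Group {
  carrier :> Type;
  gmul : carrier -> carrier -> carrier;
  ginv : carrier -> carrier;
  gone : carrier;
  gmulA : forall x y z, gmul x (gmul y z) = gmul (gmul x y) z;
  gmul1 : forall x, gmul gone x = x;
  gmulV : forall x, gmul (ginv x) x = gone
}.

Arguments gmul {g}.
Arguments ginv {g}.
Arguments gone {g}.

Definition word_prod {G : group} (w : list G) : G :=
  fold_right gmul gone w.

Definition in_symm {G : group} (S : list G) (x : G) : Prop :=
  In x S \/ In (ginv x) S.

Definition generates {G : group} (S : list G) : Prop :=
  forall g : G, exists w : list G,
    (forall x, In x w -> in_symm S x) /\ word_prod w = g.

Definition cayley_adj {G : group} (S : list G) (g h : G) : Prop :=
  in_symm S (gmul h (ginv g)).

Section Graphs.
Variable V : Type.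
Variable adj : V -> V -> Prop.

Definition is_ray (r : nat -> V) : Prop :=
  (forall m n, r m = r n -> m = n) /\ (forall n, adj (r n) (r (S n))).

Definition is_path (len : nat) (f : nat -> V) : Prop :=
  forall i, i < len -> adj (f i) (f (S i)).

Definition path_between (r1 r2 : nat -> V) (p : nat * (nat -> V)) : Prop :=
  is_path (fst p) (snd p) /\
  (exists m, snd p 0 = r1 m) /\ (exists n, snd p (fst p) = r2 n).

Definition paths_disjoint (p q : nat * (nat -> V)) : Prop :=
  forall a b, a <= fst p -> b <= fst q -> snd p a <> snd q b.

Definition rays_equiv (r1 r2 : nat -> V) : Prop :=
  exists P : nat -> nat * (nat -> V),
    (forall i, path_between r1 r2 (P i)) /\
    (forall i j, i <> j -> paths_disjoint (P i) (P j)).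

Definition has_exactly_two_ends : Prop :=
  exists r1 r2, is_ray r1 /\ is_ray r2 /\ ~ rays_equiv r1 r2 /\
    forall r, is_ray r -> rays_equiv r r1 \/ rays_equiv r r2.

Definition proper_coloring (k : nat) (c : V -> nat) : Prop :=
  (forall v, c v < k) /\ (forall u v, adj u v -> c u <> c v).

Definition colorable (k : nat) : Prop := exists c, proper_coloring k c.

Definition is_chromatic_number (k : nat) : Prop :=
  colorable k /\ forall j, colorable j -> k <= j.

Definition is_automorphism (f : V -> V) : Prop :=
  (exists g : V -> V, (forall x, g (f x) = x) /\ (forall y, f (g y) = y)) /\
  (forall x y, adj x y <-> adj (f x) (f y)).

(* the group of colour-preserving automorphisms has finitely many orbits *)
Definition periodic_coloring {C : Type} (c : V -> C) : Prop :=
  exists reps : list V, forall v, exists w, In w reps /\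
    exists f, is_automorphism f /\ (forall x, c (f x) = c x) /\ f w = v.

End Graphs.

Arguments is_ray {V}.
Arguments has_exactly_two_ends {V}.
Arguments proper_coloring {V}.
Arguments is_chromatic_number {V}.
Arguments periodic_coloring {V} adj {C} c.

(* Γ is finitely generated with exactly 2 ends: some (hence every) Cayley
   graph w.r.t. a finite generating set has exactly two ends. *)
Definition group_two_ended (G : group) : Prop :=
  exists S0 : list G, generates S0 /\ has_exactly_two_ends (cayley_adj S0).

(* Main.v *)
Require Import Defs.
From Stdlib Require Import List Arith ZArith Lia Classical ClassicalEpsilon FunctionalExtensionality FinFun.
Import ListNotations.

Section GroupFacts.
Variable G : group.
Local Infix "**" := (@gmul G) (at level 40, left associativity).

Lemma gmulV_r (x : G) : x ** ginv x = gone.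
Proof.
  set (y := ginv x).
  rewrite <- (gmul1 G (x ** y)).
  rewrite <- (gmulV G y) at 1.
  rewrite <- gmulA. rewrite (gmulA G y x y). unfold y. rewrite gmulV, gmul1.
  apply gmulV.
Qed.

Lemma gmul1_r (x : G) : x ** gone = x.
Proof. rewrite <- (gmulV G x), gmulA, gmulV_r, gmul1. reflexivity. Qed.

Lemma gcancel_l (a x y : G) : a ** x = a ** y -> x = y.
Proof. intro H. rewrite <- (gmul1 G x), <- (gmul1 G y), <- (gmulV G a), <- !gmulA, H. reflexivity. Qed.

Lemma gcancel_r (a x y : G) : x ** a = y ** a -> x = y.
Proof. intro H. rewrite <- (gmul1_r x), <- (gmul1_r y), <- (gmulV_r a), !gmulA, H. reflexivity. Qed.

Lemma ginv_inv (x : G) : ginv (ginv x) = x.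
Proof. apply (gcancel_l (ginv x)). rewrite gmulV_r, gmulV. reflexivity. Qed.

Lemma ginv_mul (x y : G) : ginv (x ** y) = ginv y ** ginv x.
Proof. apply (gcancel_l (x ** y)). rewrite gmulV_r, <- gmulA, (gmulA G y), gmulV_r, gmul1, gmulV_r. reflexivity. Qed.

Lemma ginv_one : ginv (@gone G) = gone.
Proof. rewrite <- (gmul1_r (ginv gone)). apply gmulV. Qed.

Lemma gmulKV (x y : G) : x ** y ** ginv y = x.
Proof. rewrite <- gmulA, gmulV_r, gmul1_r. reflexivity. Qed.

Lemma gmulVK (x y : G) : x ** ginv y ** y = x.
Proof. rewrite <- gmulA, gmulV, gmul1_r. reflexivity. Qed.

Fixpoint pown (z : G) (n : nat) : G :=
  match n with O => gone | S m => pown z m ** z end.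

Definition zpow (z : G) (j : Z) : G :=
  if Z.leb 0 j then pown z (Z.to_nat j) else pown (ginv z) (Z.to_nat (- j)).

Local Open Scope Z_scope.
Lemma zpow0 z : zpow z 0 = gone.
Proof. reflexivity. Qed.

Lemma zpow_succ z j : zpow z (j + 1) = zpow z j ** z.
Proof.
  unfold zpow. destruct (Z.leb_spec 0 j); destruct (Z.leb_spec 0 (j+1)); try lia.
  - replace (Z.to_nat (j+1)) with (S (Z.to_nat j)) by lia. reflexivity.
  - destruct (Z.eq_dec j (-1)) as [->|Hne].
    + simpl. rewrite gmul1, gmulV. reflexivity.
    + lia.
  - replace (Z.to_nat (- j)) with (S (Z.to_nat (- (j+1)))) by lia. simpl.
    rewrite gmulVK. reflexivity.
Qed.

Lemma zpow_pred z j : zpow z (j - 1) = zpow z j ** ginv z.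
Proof.
  replace j with ((j - 1) + 1) at 2 by lia. rewrite zpow_succ, gmulKV. reflexivity.
Qed.

Lemma zpow_add z a b : zpow z (a + b) = zpow z a ** zpow z b.
Proof.
  revert a. induction b using Z.peano_ind; intro a.
  - rewrite Z.add_0_r, zpow0, gmul1_r. reflexivity.
  - rewrite <- Z.add_1_r. replace (a + (b + 1))%Z with ((a + b) + 1)%Z by lia.
    rewrite !zpow_succ, IHb, gmulA. reflexivity.
  - rewrite <- Z.sub_1_r. replace (a + (b - 1))%Z with ((a + b) - 1)%Z by lia.
    rewrite !zpow_pred, IHb, gmulA. reflexivity.
Qed.

Lemma zpow_1 z : zpow z 1 = z.
Proof. simpl. apply gmul1. Qed.

Lemma zpow_opp z a : zpow z (- a) = ginv (zpow z a).
Proof.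
  apply (gcancel_l (zpow z a)). rewrite <- zpow_add, gmulV_r.
  replace (a + - a)%Z with 0%Z by lia. reflexivity.
Qed.

Lemma zpow_cancel g z a : g ** zpow z a ** zpow z (- a) = g.
Proof. rewrite <- gmulA, <- zpow_add. replace (a + - a)%Z with 0%Z by lia. rewrite zpow0, gmul1_r. reflexivity. Qed.

Lemma zpow_comb g z a b : g ** zpow z a ** zpow z b = g ** zpow z (a + b).
Proof. rewrite <- gmulA, <- zpow_add. reflexivity. Qed.

End GroupFacts.

Lemma php {A : Type} (f : nat -> A) (l : list A) :
  (forall i, In (f i) l) -> exists i j, i < j /\ f i = f j.
Proof.
  intro Hin. apply NNPP. intro Hn.
  assert (Hinj : forall i j, f i = f j -> i = j).
  { intros i j E. destruct (Nat.lt_trichotomy i j) as [H|[H|H]]; auto.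
    - exfalso; apply Hn; eauto.
    - exfalso; apply Hn; exists j, i; split; auto. }
  assert (ND : NoDup (map f (seq 0 (S (length l))))).
  { apply FinFun.Injective_map_NoDup. intros a b; apply Hinj. apply seq_NoDup. }
  assert (Hincl : incl (map f (seq 0 (S (length l)))) l).
  { intros x Hx. apply in_map_iff in Hx. destruct Hx as [i [<- _]]. apply Hin. }
  pose proof (NoDup_incl_length ND Hincl) as HL.
  rewrite length_map, length_seq in HL. lia.
Qed.

Lemma php_ex {A : Type} (R : nat -> A -> Prop) (l : list A) :
  (forall i, exists x, In x l /\ R i x) -> exists i j x, i < j /\ R i x /\ R j x.
Proof.
  intro H.
  assert (Hf : exists f : nat -> A, forall i, In (f i) l /\ R i (f i)).
  { exists (fun i => proj1_sig (constructive_indefinite_description _ (H i))).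
    intro i. exact (proj2_sig (constructive_indefinite_description _ (H i))). }
  destruct Hf as [f Hf].
  destruct (php f l (fun i => proj1 (Hf i))) as [i [j [Hij E]]].
  exists i, j, (f i). split; auto. split. apply Hf. rewrite E. apply Hf.
Qed.

Lemma ex_min_nat (P : nat -> Prop) : (exists n, P n) -> exists n, P n /\ forall m, P m -> n <= m.
Proof.
  intros [n Hn]. revert Hn. induction n as [n IH] using (well_founded_induction lt_wf).
  intro Hn. destruct (classic (exists m, P m /\ m < n)) as [[m [Hm Hlt]]|Hno].
  - exact (IH m Hlt Hm).
  - exists n. split; auto. intros m Hm. destruct (le_lt_dec n m); auto. exfalso; eauto.
Qed.

Section CayleyFacts.
Variable G : group.
Variable S : list G.
Local Infix "**" := (@gmul G) (at level 40, left associativity).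

Lemma in_symm_inv (x : G) : in_symm S x -> in_symm S (ginv x).
Proof. intros [H|H]; [right; rewrite ginv_inv|left]; auto. Qed.

Lemma cadj_sym (g h : G) : cayley_adj S g h -> cayley_adj S h g.
Proof.
  unfold cayley_adj. intro H. apply in_symm_inv in H.
  rewrite ginv_mul, ginv_inv in H. exact H.
Qed.

Lemma cadj_trans_iff (g h y : G) : cayley_adj S (g ** y) (h ** y) <-> cayley_adj S g h.
Proof.
  unfold cayley_adj. rewrite ginv_mul, gmulA, gmulKV. tauto.
Qed.

Lemma cadj_irrefl (g : G) : ~ In gone S -> ~ cayley_adj S g g.
Proof.
  intros H1 H. unfold cayley_adj, in_symm in H. rewrite gmulV_r, ginv_one in H. tauto.
Qed.

Lemma rtrans_auto (y : G) : is_automorphism G (cayley_adj S) (fun x => x ** y).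
Proof.
  split.
  - exists (fun x => x ** ginv y). split; intro x; [apply gmulKV|apply gmulVK].
  - intros x x'. symmetry. apply cadj_trans_iff.
Qed.

End CayleyFacts.

Fixpoint allpats (k n : nat) : list (list nat) :=
  match n with
  | O => [[]]
  | S m => flat_map (fun x => map (cons x) (allpats k m)) (seq 0 k)
  end.

Lemma allpats_in k : forall n l, length l = n -> (forall x, In x l -> x < k) -> In l (allpats k n).
Proof.
  induction n as [|n IH]; intros l Hl Hk.
  - destruct l; [left; reflexivity|discriminate].
  - destruct l as [|x l]; [discriminate|]. simpl. apply in_flat_map. exists x. split.
    + apply in_seq. assert (x < k) by (apply Hk; left; auto). lia.
    + apply in_map. apply IH. simpl in Hl; lia. intros y Hy; apply Hk; right; auto.
Qed.

Lemma map_eq_in {A B : Type} (f g : A -> B) l x : map f l = map g l -> In x l -> f x = g x.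
Proof.
  induction l as [|a l IH]; simpl; intros E H; [contradiction|].
  injection E as E1 E2. destruct H as [<-|H]; auto.
Qed.

Lemma mul_split (a b i j N : nat) : i < N -> j < N -> a * N + i = b * N + j -> a = b /\ i = j.
Proof.
  intros Hi Hj E. destruct (Nat.lt_trichotomy a b) as [H|[H|H]].
  - exfalso. assert (a * N + N <= b * N) by nia. lia.
  - subst. lia.
  - exfalso. assert (b * N + N <= a * N) by nia. lia.
Qed.

Section Coloring.
Variable G : group.
Variable S : list G.
Hypothesis noid : ~ In gone S.
Local Infix "**" := (@gmul G) (at level 40, left associativity).
Variable z : G.
Variable lev : G -> Z.
Variable C : nat.
Hypothesis L1 : forall g j, lev (g ** zpow G z j) = (lev g + j)%Z.
Hypothesis L2 : forall g h, cayley_adj S g h -> (lev h - lev g <= Z.of_nat C)%Z.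
Hypothesis L3 : forall (a : Z) (W : nat), exists Sig : list G,
    forall g, (a <= lev g < a + Z.of_nat W)%Z -> In g Sig.

Local Notation adj := (cayley_adj S).

Lemma L2' g h : adj g h -> (Z.abs (lev h - lev g) <= Z.of_nat C)%Z.
Proof. intro H. pose proof (L2 _ _ H). pose proof (L2 _ _ (cadj_sym _ _ _ _ H)). lia. Qed.

Lemma some_coloring : exists k, colorable G adj k.
Proof.
  destruct (L3 0 1) as [LD HLD].
  set (N := length LD).
  assert (Hidx : forall x, exists n, In x LD -> n < N /\ nth n LD gone = x).
  { intro x. destruct (classic (In x LD)) as [H|H].
    - destruct (In_nth _ _ gone H) as [n Hn]. exists n. auto.
    - exists 0. tauto. }
  set (idx := fun x => proj1_sig (constructive_indefinite_description _ (Hidx x))).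
  assert (Hidx' : forall x, In x LD -> idx x < N /\ nth (idx x) LD gone = x).
  { intro x. exact (proj2_sig (constructive_indefinite_description _ (Hidx x))). }
  set (base := fun g => g ** zpow G z (- lev g)).
  assert (Hb : forall g, In (base g) LD).
  { intro g. apply HLD. unfold base. rewrite L1. lia. }
  exists ((C+1) * N). exists (fun g => Z.to_nat (lev g mod Z.of_nat (C+1)) * N + idx (base g)).
  split.
  - intro v. pose proof (proj1 (Hidx' _ (Hb v))).
    assert (Z.to_nat (lev v mod Z.of_nat (C+1)) < C+1).
    { pose proof (Z.mod_pos_bound (lev v) (Z.of_nat (C+1))). lia. }
    nia.
  - intros u v Huv E.
    pose proof (proj1 (Hidx' _ (Hb u))). pose proof (proj1 (Hidx' _ (Hb v))).
    destruct (mul_split _ _ _ _ _ H H0 E) as [E1 E2].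
    pose proof (L2' _ _ Huv) as Hd.
    assert (Hl : lev u = lev v).
    { pose proof (Z.div_mod (lev u) (Z.of_nat (C+1))).
      pose proof (Z.div_mod (lev v) (Z.of_nat (C+1))).
      pose proof (Z.mod_pos_bound (lev v) (Z.of_nat (C+1))).
      pose proof (Z.mod_pos_bound (lev u) (Z.of_nat (C+1))).
      assert (lev u mod Z.of_nat (C+1) = lev v mod Z.of_nat (C+1))%Z by lia.
      set (qu := (lev u / Z.of_nat (C+1))%Z) in *.
      set (qv := (lev v / Z.of_nat (C+1))%Z) in *.
      assert (qu = qv) by nia. nia. }
    assert (Eb : base u = base v).
    { rewrite <- (proj2 (Hidx' _ (Hb u))), <- (proj2 (Hidx' _ (Hb v))), E2. reflexivity. }
    unfold base in Eb. rewrite Hl in Eb. apply gcancel_r in Eb. subst.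
    exact (cadj_irrefl _ _ _ noid Huv).
Qed.

Section Periodize.
Variable k : nat.
Variable c : G -> nat.
Hypothesis Hc : proper_coloring adj k c.

Lemma periodize : exists c', proper_coloring adj k c' /\ periodic_coloring adj c'.
Proof.
  destruct (L3 0 (C+1)) as [Sig0 HS0].
  set (W := (Z.of_nat C + 1)%Z).
  set (pat := fun i : nat => map (fun w => c (w ** zpow G z (Z.of_nat i * W))) Sig0).
  destruct (php pat (allpats k (length Sig0))) as [i1 [i2 [Hi12 Ep]]].
  { intro i. apply allpats_in. unfold pat; rewrite length_map; auto.
    intros x Hx. unfold pat in Hx. apply in_map_iff in Hx. destruct Hx as [w [<- _]]. apply Hc. }
  set (m1 := (Z.of_nat i1 * W)%Z). set (m2 := (Z.of_nat i2 * W)%Z).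
  set (P := (m2 - m1)%Z).
  assert (HP : (P >= W)%Z) by (unfold P, m1, m2, W; nia).
  assert (HP0 : (P > 0)%Z) by (unfold W in HP; lia).
  set (q := fun g => ((lev g - m1) / P)%Z).
  set (base := fun g => g ** zpow G z (- (P * q g))).
  set (c' := fun g => c (base g)).
  assert (Hqb : forall g, (P * q g <= lev g - m1 < P * q g + P)%Z).
  { intro g. unfold q. pose proof (Z.div_mod (lev g - m1) P).
    pose proof (Z.mod_pos_bound (lev g - m1) P). lia. }
  assert (Hlb : forall g, (m1 <= lev (base g) < m2)%Z).
  { intro g. unfold base. rewrite L1. pose proof (Hqb g). unfold P in *. lia. }
  assert (Hqs : forall g j, q (g ** zpow G z (P * j)) = (q g + j)%Z).
  { intros g j. unfold q. rewrite L1.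
    replace (lev g + P * j - m1)%Z with ((lev g - m1) + j * P)%Z by lia.
    rewrite Z.div_add; lia. }
  assert (Hbs : forall g j, base (g ** zpow G z (P * j)) = base g).
  { intros g j. unfold base. rewrite Hqs, zpow_comb. f_equal. f_equal. lia. }
  assert (Key : forall g h, adj g h -> (q g <= q h)%Z -> c' g <> c' h).
  { intros g h Hgh Hq.
    set (a := base g). set (b := h ** zpow G z (- (P * q g))).
    assert (Hab : adj a b) by (apply cadj_trans_iff; exact Hgh).
    assert (Hdl := L2' _ _ Hgh).
    assert (Hq2 : (q h <= q g + 1)%Z).
    { pose proof (Hqb g). pose proof (Hqb h). unfold W in HP. nia. }
    destruct (Z.eq_dec (q h) (q g)) as [E|E].
    - unfold c'. fold a. replace (base h) with b.
      + apply Hc. exact Hab.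
      + unfold b, base. rewrite E. reflexivity.
    - assert (E' : q h = (q g + 1)%Z) by lia.
      assert (Hbl : (m2 <= lev b < m2 + Z.of_nat C)%Z).
      { unfold b. rewrite L1. pose proof (Hqb h). pose proof (Hlb g). fold a in H0.
        pose proof (L2 _ _ Hab). unfold b in H1. rewrite L1 in H1. unfold P in *. lia. }
      set (w := b ** zpow G z (- m2)).
      assert (Hw : In w Sig0).
      { apply HS0. unfold w. rewrite L1. lia. }
      pose proof (map_eq_in _ _ _ _ Ep Hw) as Ew. simpl in Ew. fold m1 m2 in Ew.
      unfold w in Ew. rewrite !zpow_comb in Ew.
      replace (- m2 + m2)%Z with 0%Z in Ew by lia. rewrite zpow0, gmul1_r in Ew.
      unfold c'. fold a. replace (base h) with (b ** zpow G z (- m2 + m1)).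
      + rewrite Ew. apply Hc. exact Hab.
      + unfold b, base. rewrite zpow_comb, E'. f_equal. f_equal. unfold P. lia. }
  exists c'. split; [split|].
  - intro v. apply Hc.
  - intros u v Huv. destruct (Z.le_gt_cases (q u) (q v)) as [H|H].
    + apply Key; auto.
    + intro E. apply (Key v u); [apply cadj_sym; auto|lia|auto].
  - destruct (L3 m1 (Z.to_nat P)) as [Sig1 HS1].
    exists Sig1. intro v. exists (base v). split.
    + apply HS1. pose proof (Hlb v). unfold P in *. lia.
    + exists (fun x => x ** zpow G z (P * q v)). split; [apply rtrans_auto|split].
      * intro x. unfold c'. rewrite Hbs. reflexivity.
      * unfold base. rewrite zpow_comb. replace (- (P * q v) + P * q v)%Z with 0%Z by lia.
        rewrite zpow0, gmul1_r. reflexivity.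
Qed.
End Periodize.

Lemma coloring_conclusion : exists k, is_chromatic_number adj k /\
    exists c : G -> nat, proper_coloring adj k c /\ periodic_coloring adj c.
Proof.
  destruct (ex_min_nat _ some_coloring) as [k [[c Hc] Hmin]].
  exists k. split. split; [exists c; auto|exact Hmin].
  apply (periodize k c Hc).
Qed.
End Coloring.

Section Paths.
Variable G : group.
Variable S0 : list G.
Local Infix "**" := (@gmul G) (at level 40, left associativity).
Local Notation adj := (cayley_adj S0).

Definition wk (a b : G) (n : nat) (f : nat -> G) : Prop :=
  is_path G adj n f /\ f 0 = a /\ f n = b.
Definition avoid (K : list G) (n : nat) (f : nat -> G) : Prop :=
  forall i, i <= n -> ~ In (f i) K.
Definition inside (R : G -> Prop) (n : nat) (f : nat -> G) : Prop :=
  forall i, i <= n -> R (f i).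

Lemma wk_rev a b n f : wk a b n f -> wk b a n (fun i => f (n - i)).
Proof.
  intros [Hp [H0 Hn]]. split; [|split].
  - intros i Hi. apply cadj_sym. replace (n - i) with (S (n - S i)) by lia. apply Hp. lia.
  - rewrite Nat.sub_0_r. auto.
  - rewrite Nat.sub_diag. auto.
Qed.

Lemma wk_app a b c n m f g : wk a b n f -> wk b c m g ->
  wk a c (n + m) (fun i => if i <=? n then f i else g (i - n)).
Proof.
  intros [Hp [H0 Hn]] [Gp [G0 Gn]]. split; [|split].
  - intros i Hi. destruct (Nat.leb_spec i n); destruct (Nat.leb_spec (S i) n).
    + apply Hp; lia.
    + assert (i = n) by lia. subst i. rewrite Hn, <- G0.
      replace (S n - n) with 1 by lia. apply Gp. lia.
    + lia.
    + replace (S i - n) with (S (i - n)) by lia. apply Gp. lia.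
  - simpl. auto.
  - destruct (Nat.leb_spec (n + m) n).
    + assert (m = 0) by lia. subst m. rewrite Nat.add_0_r, Hn, <- G0. auto.
    + replace (n + m - n) with m by lia. auto.
Qed.

Lemma wk_one a b : adj a b -> wk a b 1 (fun i => if i =? 0 then a else b).
Proof. intro H. split; [|split; reflexivity]. intros i Hi. assert (i = 0) by lia. subst. exact H. Qed.

Lemma wk_nil a : wk a a 0 (fun _ => a).
Proof. split; [|split; reflexivity]. intros i Hi; lia. Qed.

Lemma wk_prefix a b n f i : wk a b n f -> i <= n -> wk a (f i) i f.
Proof. intros [Hp [H0 Hn]] Hi. split; [|split; auto]. intros j Hj. apply Hp. lia. Qed.

Lemma wk_shift a c n f : wk a c (S n) f -> wk (f 1) c n (fun i => f (S i)).
Proof. intros [Hp [H0 Hn]]. split; [|split; auto]. intros j Hj. apply Hp. lia. Qed.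

Lemma wk_trans a b n f y : wk a b n f -> wk (a ** y) (b ** y) n (fun i => f i ** y).
Proof.
  intros [Hp [H0 Hn]]. split; [|split; congruence].
  intros i Hi. apply cadj_trans_iff. apply Hp; auto.
Qed.

Lemma connected : generates S0 -> forall a b, exists n f, wk a b n f.
Proof.
  intros Hgen a b.
  assert (Hw : forall w, (forall x, In x w -> in_symm S0 x) -> exists n f, wk a (word_prod w ** a) n f).
  { induction w as [|x w IH]; intro Hx.
    - simpl. rewrite gmul1. exists 0, (fun _ => a). apply wk_nil.
    - destruct IH as [n [f Hf]]. { intros y Hy; apply Hx; right; auto. }
      change (word_prod (x :: w)) with (x ** word_prod w).
      exists (n + 1). eexists. eapply wk_app. exact Hf. apply wk_one.
      unfold cayley_adj. rewrite ginv_mul, gmulA, !gmulKV. apply Hx. left; auto. }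
  destruct (Hgen (b ** ginv a)) as [w [Hw1 Hw2]].
  destruct (Hw w Hw1) as [n [f Hf]]. rewrite Hw2, gmulVK in Hf. eauto.
Qed.

Definition Wcl (K : list G) (W : G -> Prop) : Prop :=
  forall v w, W v -> ~ In v K -> adj v w -> ~ In w K -> W w.

Lemma Wcl_compl K W : Wcl K W -> Wcl K (fun v => ~ W v).
Proof. intros H v w Hv HvK Hvw HwK Hw. apply Hv. apply (H w v); auto. apply cadj_sym; auto. Qed.

Lemma Wcl_mono K K' W : incl K K' -> Wcl K W -> Wcl K' W.
Proof. intros Hi H v w Hv HvK Hvw HwK. apply (H v w); auto. Qed.

Lemma along K W n f : Wcl K W -> is_path G adj n f -> W (f 0) -> avoid K n f -> W (f n).
Proof.
  intros Hc Hp H0 Ha. assert (forall i, i <= n -> W (f i)).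
  { induction i; intro Hi; auto. apply (Hc (f i)); try apply Ha; try lia. apply IHi; lia. apply Hp; lia. }
  auto.
Qed.

Lemma cross K W n f : Wcl K W -> is_path G adj n f -> W (f 0) -> ~ W (f n) ->
  exists i, i <= n /\ In (f i) K.
Proof.
  intros Hc Hp H0 Hn. apply NNPP. intro Hno. apply Hn. apply (along K); auto.
  intros i Hi HK. apply Hno. eauto.
Qed.

Lemma Wcl_trans K W x : Wcl K W ->
  Wcl (map (fun k => k ** x) K) (fun v => W (v ** ginv x)).
Proof.
  intros H v w Hv HvK Hvw HwK. apply (H (v ** ginv x)); auto.
  - intro Hi. apply HvK. apply in_map_iff. exists (v ** ginv x). split; auto. apply gmulVK.
  - apply cadj_trans_iff. exact Hvw.
  - intro Hi. apply HwK. apply in_map_iff. exists (w ** ginv x). split; auto. apply gmulVK.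
Qed.

Definition Side (K : list G) (r : nat -> G) (v : G) : Prop :=
  exists n f m, wk v (r m) n f /\ avoid K n f.

Lemma Side_notK K r v : Side K r v -> ~ In v K.
Proof. intros [n [f [m [[_ [H0 _]] Ha]]]]. rewrite <- H0. apply Ha. lia. Qed.

Lemma Side_cl K r : Wcl K (Side K r).
Proof.
  intros v w [n [f [m [Hf Ha]]]] HvK Hvw HwK.
  exists (1 + n). eexists. exists m. split.
  - eapply wk_app. apply wk_one. apply cadj_sym. exact Hvw. exact Hf.
  - intros i Hi. destruct (Nat.leb_spec i 1).
    + destruct (Nat.eqb_spec i 0); auto. 
    + apply Ha. lia.
Qed.

Lemma Side_tail K r m : ~ In (r m) K -> Side K r (r m).
Proof. intro H. exists 0, (fun _ => r m), m. split. apply wk_nil. intros i _. auto. Qed.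

Lemma tail_avoid r : is_ray adj r -> forall F, exists N, forall n, N <= n -> ~ In (r n) F.
Proof.
  intros [Hinj _]. induction F as [|x F [N HN]].
  - exists 0. intros n _ H; inversion H.
  - destruct (classic (exists n, r n = x)) as [[n0 Hn0]|Hno].
    + exists (Nat.max N (S n0)). intros n Hn [E|E].
      * subst. apply Hinj in E. lia.
      * apply (HN n); auto. lia.
    + exists N. intros n Hn [E|E]; [apply Hno; eauto|apply (HN n); auto].
Qed.

Lemma ray_not_fin r N L : is_ray adj r -> ~ (forall n, N <= n -> In (r n) L).
Proof.
  intros [Hinj _] H. destruct (php (fun i => r (N + i)) L) as [i [j [Hij E]]].
  - intro i. apply H. lia.
  - apply Hinj in E. lia.
Qed.

Lemma prefix_in (r : nat -> G) N a : a < N -> In (r a) (map r (seq 0 N)).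
Proof. intro H. apply in_map. apply in_seq. lia. Qed.

Definition sepby (r r' : nat -> G) (F : list G) : Prop :=
  forall p, path_between G adj r r' p -> exists a, a <= fst p /\ In (snd p a) F.

Lemma noteq r r' F : sepby r r' F -> ~ rays_equiv G adj r r'.
Proof.
  intros Hs [P [HP Hd]].
  destruct (php_ex (fun i x => exists a, a <= fst (P i) /\ snd (P i) a = x) F) as [i [j [x [Hij [[a [Ha Ea]] [b [Hb Eb]]]]]]].
  - intro i. destruct (Hs (P i) (HP i)) as [a [Ha Hin]]. exists (snd (P i) a). eauto.
  - apply (Hd i j) with a b; auto. lia. congruence.
Qed.

Lemma sep_of_noteq r r' : ~ rays_equiv G adj r r' -> exists F, sepby r r' F.
Proof.
  intro Hne. apply NNPP. intro Hno.
  assert (Hall : forall F, exists p, path_between G adj r r' p /\ forall a, a <= fst p -> ~ In (snd p a) F).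
  { intro F. apply NNPP. intro H. apply Hno. exists F. intros p Hp. apply NNPP. intro H2.
    apply H. exists p. split; auto. intros a Ha Hin. apply H2. eauto. }
  set (ch := fun F => proj1_sig (constructive_indefinite_description _ (Hall F))).
  assert (Hch : forall F, path_between G adj r r' (ch F) /\ forall a, a <= fst (ch F) -> ~ In (snd (ch F) a) F).
  { intro F. exact (proj2_sig (constructive_indefinite_description _ (Hall F))). }
  set (verts := fun p : nat * (nat -> G) => map (snd p) (seq 0 (S (fst p)))).
  set (acc := fix acc n := match n with O => [] | S m => acc m ++ verts (ch (acc m)) end).
  assert (Hmono : forall i j x, i <= j -> In x (acc i) -> In x (acc j)).
  { intros i j x Hij. induction Hij; auto. intro H. simpl. apply in_or_app. left; auto. }
  apply Hne. exists (fun i => ch (acc i)). split.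
  - intro i. apply Hch.
  - assert (Hlt : forall i j, i < j -> paths_disjoint G (ch (acc i)) (ch (acc j))).
    { intros i j Hij a b Ha Hb E. apply (proj2 (Hch (acc j)) b Hb). rewrite <- E.
      apply (Hmono (S i)); auto. simpl. apply in_or_app. right. unfold verts. apply in_map. apply in_seq. lia. }
    intros i j Hij. destruct (Nat.lt_trichotomy i j) as [H|[H|H]]; [auto|congruence|].
    intros a b Ha Hb E. apply (Hlt j i H b a); auto.
Qed.

Lemma sep_sym r r' F : sepby r r' F -> sepby r' r F.
Proof.
  intros Hs [n f] [Hp [[m Hm] [m' Hm']]]. simpl in *.
  destruct (Hs (n, fun i => f (n - i))) as [a [Ha Hin]].
  - split; [|split]; simpl.
    + apply (wk_rev (f 0) (f n) n f). split; auto.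
    + exists m'. rewrite Nat.sub_0_r. auto.
    + exists m. rewrite Nat.sub_diag. auto.
  - simpl in *. exists (n - a). split; [lia|auto].
Qed.

Lemma sep_gen K W r r' F1 F2 : Wcl K W ->
  (forall a, W (r a) \/ In (r a) F1) -> (forall b, ~ W (r' b) \/ In (r' b) F2) ->
  sepby r r' (K ++ F1 ++ F2).
Proof.
  intros Hc H1 H2 [n f] [Hp [[a Ha] [b Hb]]]. simpl in *.
  destruct (H1 a) as [Wa|Fa]; [|exists 0; split; [lia|]; rewrite Ha; apply in_or_app; right; apply in_or_app; left; auto].
  destruct (H2 b) as [Wb|Fb]; [|exists n; split; [lia|]; rewrite Hb; apply in_or_app; right; apply in_or_app; right; auto].
  destruct (cross K W n f Hc Hp) as [i [Hi Hin]]; [congruence|congruence|].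
  exists i. split; auto. apply in_or_app. left; auto.
Qed.

End Paths.

Lemma list_inf {A : Type} (P : nat -> A -> Prop) (l : list A) :
  (forall n, exists x, In x l /\ P n x) -> (forall n x, P (S n) x -> P n x) ->
  exists x, In x l /\ forall n, P n x.
Proof.
  intros H Hmon.
  assert (Hmon' : forall n m x, m <= n -> P n x -> P m x).
  { intros n m x Hmn. induction Hmn; auto. }
  induction l as [|a l IH].
  - destruct (H 0) as [x [[] _]].
  - destruct (classic (forall n, P n a)) as [Ha|Ha].
    + exists a. split; [left|]; auto.
    + apply not_all_ex_not in Ha. destruct Ha as [n0 Hn0].
      destruct IH as [x [Hx Hxp]].
      * intro n. destruct (H (n + n0)) as [x [[<-|Hx] Hp]].
        -- exfalso. apply Hn0. apply (Hmon' (n + n0)); auto. lia.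
        -- exists x. split; auto. apply (Hmon' (n + n0)); auto. lia.
      * exists x. split; [right|]; auto.
Qed.

Section Konig.
Variable G : group.
Variable S0 : list G.
Local Infix "**" := (@gmul G) (at level 40, left associativity).
Local Notation adj := (cayley_adj S0).

Definition nbrs (u : G) : list G := map (fun s => s ** u) (S0 ++ map ginv S0).

Lemma nbrs_adj u w : adj u w -> In w (nbrs u).
Proof.
  intro H. unfold nbrs. apply in_map_iff. exists (w ** ginv u). split; [apply gmulVK|].
  apply in_or_app. destruct H as [H|H]; [left; auto|right].
  apply in_map_iff. exists (ginv (w ** ginv u)). split; auto. apply ginv_inv.
Qed.

Fixpoint ball (v : G) (n : nat) : list G :=
  match n with O => [v] | S m => ball v m ++ flat_map nbrs (ball v m) end.

Lemma ball_in v n : forall w m f, wk G S0 v w m f -> m <= n -> In w (ball v n).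
Proof.
  induction n as [|n IH]; intros w m f Hw Hm.
  - assert (m = 0) by lia. subst. destruct Hw as [_ [H0 Hn]]. left. congruence.
  - simpl. apply in_or_app. destruct (Nat.leb_spec m n).
    + left. eauto.
    + assert (m = S n) by lia. subst m. right. apply in_flat_map. exists (f n). split.
      * apply (IH (f n) n f); auto. apply (wk_prefix G S0 v w (S n)); auto.
      * destruct Hw as [Hp [_ Hn]]. rewrite <- Hn. apply nbrs_adj. apply Hp. lia.
Qed.

Variable R : G -> Prop.
Variable v0 : G.
Hypothesis Rv0 : R v0.
Hypothesis Rconn : forall w, R w -> exists n f, wk G S0 v0 w n f /\ inside G R n f.
Hypothesis Rinf : forall L : list G, exists w, R w /\ ~ In w L.

Definition walkR u w m := exists f, wk G S0 u w m f /\ inside G R m f.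

Lemma walkR_app a b c n m : walkR a b n -> walkR b c m -> walkR a c (n + m).
Proof.
  intros [f [Hf Hi]] [g [Hg Hj]]. eexists. split. eapply wk_app; eauto.
  intros i Hi'. cbv beta. destruct (Nat.leb_spec i n). apply Hi; auto. apply Hj; lia.
Qed.

Lemma walkR_first a c n : walkR a c (S n) -> exists b, adj a b /\ R b /\ walkR b c n.
Proof.
  intros [f [Hf Hi]]. exists (f 1). destruct Hf as [Hp [H0 Hn]]. split; [|split].
  - rewrite <- H0. apply Hp. lia.
  - apply Hi. lia.
  - exists (fun i => f (S i)). split. apply (wk_shift G S0 a c n f). split; auto.
    intros i Hi'. apply Hi. lia.
Qed.

Lemma walkR_last a b c n : walkR a b n -> adj b c -> R c -> walkR a c (n + 1).
Proof.
  intros Hab Hbc Rc. apply (walkR_app a b c n 1); auto.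
  eexists. split. apply wk_one; auto. intros i Hi. cbv beta.
  destruct (Nat.eqb_spec i 0); auto. destruct Hab as [f [[_ [_ Hn]] Hi']]. rewrite <- Hn. apply Hi'. lia.
Qed.

Definition isd w m := walkR v0 w m /\ forall m', m' < m -> ~ walkR v0 w m'.

Lemma isd_unique w m m' : isd w m -> isd w m' -> m = m'.
Proof.
  intros [H1 H2] [H3 H4]. destruct (Nat.lt_trichotomy m m') as [H|[H|H]]; auto.
  - exfalso. apply (H4 m H H1).
  - exfalso. apply (H2 m' H H3).
Qed.

Definition Good w k := isd w k /\ forall n, exists u m, isd u m /\ k + n <= m /\ walkR w u (m - k).

Lemma good_step w k : Good w k -> exists w', adj w w' /\ Good w' (S k).
Proof.
  intros [Hd Hn].
  set (P := fun n b => adj w b /\ isd b (S k) /\ exists u m, isd u m /\ S k + n <= m /\ walkR b u (m - S k)).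
  destruct (list_inf P (nbrs w)) as [b [_ Hb]].
  - intro n. destruct (Hn (S n)) as [u [m [Hu [Hkm Hw]]]].
    replace (m - k) with (S (m - S k)) in Hw by lia.
    destruct (walkR_first _ _ _ Hw) as [b [Hwb [Rb Hbu]]].
    exists b. split; [apply nbrs_adj; auto|].
    assert (Hdb : isd b (S k)).
    { split.
      - replace (S k) with (k + 1) by lia. apply (walkR_last v0 w b k); auto. apply Hd.
      - intros m' Hm' Hwm. apply (proj2 Hu (m' + (m - S k))). lia.
        apply (walkR_app v0 b u); auto. }
    split; auto. split; auto. exists u, m. split; auto. split; auto. lia.
  - intros n x [H1 [H2 [u [m [H3 [H4 H5]]]]]]. split; auto. split; auto. exists u, m. split; auto. split; auto. lia.
  - destruct (Hb 0) as [Hwb [Hdb _]]. exists b. split; auto. split; auto.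
    intro n. destruct (Hb n) as [_ [_ [u [m H]]]]. exists u, m. auto.
Qed.

Lemma good0 : Good v0 0.
Proof.
  split.
  - split. exists (fun _ => v0). split. apply wk_nil. intros i _; auto. intros m' H; lia.
  - intro n. destruct (Rinf (ball v0 n)) as [u [Ru Hu]].
    destruct (ex_min_nat (fun m => walkR v0 u m)) as [m [Hm Hmin]].
    { destruct (Rconn u Ru) as [m [f H]]. exists m, f. auto. }
    exists u, m. split; [split; auto|split].
    + intros m' Hm' Hw. specialize (Hmin m' Hw). lia.
    + destruct (Nat.le_gt_cases m n); [|lia]. exfalso. apply Hu.
      destruct Hm as [f [Hf _]]. apply (ball_in v0 n u m f); auto.
    + rewrite Nat.sub_0_r. auto.
Qed.

Lemma konig : exists r, is_ray adj r /\ forall n, R (r n).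
Proof.
  assert (Hc : forall (wk : {p : G * nat | Good (fst p) (snd p)}),
             exists w', adj (fst (proj1_sig wk)) w' /\ Good w' (S (snd (proj1_sig wk)))).
  { intros [[w k] H]. simpl in *. apply good_step; auto. }
  set (nx := fun p => proj1_sig (constructive_indefinite_description _ (Hc p))).
  assert (Hnx : forall p, adj (fst (proj1_sig p)) (nx p) /\ Good (nx p) (S (snd (proj1_sig p)))).
  { intro p. exact (proj2_sig (constructive_indefinite_description _ (Hc p))). }
  set (sq := fix sq (n : nat) : {p : G * nat | Good (fst p) (snd p)} :=
         match n with
         | O => exist _ (v0, 0) good0
         | S m => exist (fun p => Good (fst p) (snd p)) (nx (sq m), S (snd (proj1_sig (sq m)))) (proj2 (Hnx (sq m)))
         end).
  assert (Hsnd : forall n, snd (proj1_sig (sq n)) = n).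
  { induction n; simpl; auto. }
  exists (fun n => fst (proj1_sig (sq n))). split; [split|].
  - intros m n E. pose proof (proj2_sig (sq m)) as Hm. pose proof (proj2_sig (sq n)) as Hn.
    simpl in Hm, Hn. rewrite Hsnd in Hm, Hn. rewrite E in Hm.
    exact (isd_unique _ _ _ (proj1 Hm) (proj1 Hn)).
  - intro n. simpl. apply (proj1 (Hnx (sq n))).
  - intro n. pose proof (proj2_sig (sq n)) as Hn. destruct Hn as [[[f [[_ [_ Hfn]] Hi]] _] _].
    rewrite <- Hfn. apply Hi. lia.
Qed.

End Konig.

Section FinReg.
Variable G : group.
Variable S0 : list G.
Local Infix "**" := (@gmul G) (at level 40, left associativity).
Local Notation adj := (cayley_adj S0).
Hypothesis gen : generates S0.
Hypothesis Hray : exists r, is_ray adj r.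

Lemma finreg J W : Wcl G S0 J W -> (forall v, W v -> ~ In v J) ->
  (forall r, is_ray adj r -> (forall n, W (r n)) -> False) ->
  exists L, forall v, W v -> In v L.
Proof.
  intros Hc HJ Hnr.
  set (comp := fun u v => exists n f, wk G S0 u v n f /\ avoid G J n f).
  assert (C1 : forall u, W u -> exists L, forall v, comp u v -> In v L).
  { intros u Wu. apply NNPP. intro Hno.
    destruct (konig G S0 (comp u) u) as [r [Hr Hin]].
    - exists 0, (fun _ => u). split. apply wk_nil. intros i _. apply HJ; auto.
    - intros w [n [f [Hf Ha]]]. exists n, f. split; auto. intros i Hi.
      exists i, f. split. apply (wk_prefix G S0 u w n f i Hf Hi). intros j Hj. apply Ha. lia.
    - intro L. apply NNPP. intro H. apply Hno. exists L. intros v Hv. apply NNPP. intro Hv'.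
      apply H. exists v. auto.
    - apply (Hnr r Hr). intro n. destruct (Hin n) as [m [f [[Hp [H0 Hm]] Ha]]].
      rewrite <- Hm. apply (along G S0 J W m f Hc Hp); auto. congruence. }
  assert (C2 : forall u, exists L, W u -> forall v, comp u v -> In v L).
  { intro u. destruct (classic (W u)) as [H|H].
    - destruct (C1 u H) as [L HL]. exists L. auto.
    - exists []. tauto. }
  set (Lf := fun u => proj1_sig (constructive_indefinite_description _ (C2 u))).
  assert (HLf : forall u, W u -> forall v, comp u v -> In v (Lf u)).
  { intro u. exact (proj2_sig (constructive_indefinite_description _ (C2 u))). }
  exists (flat_map Lf (flat_map (nbrs G S0) J)).
  intros v Wv. destruct J as [|j J'] eqn:EJ.
  - exfalso. destruct Hray as [r Hr]. apply (Hnr r Hr). intro n.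
    destruct (connected G S0 gen v (r n)) as [m [f [Hp [H0 Hm]]]].
    rewrite <- Hm. apply (along G S0 [] W m f Hc Hp). congruence. intros i _ [].
  - rewrite <- EJ in *.
    destruct (connected G S0 gen v j) as [n [f Hf]].
    destruct (ex_min_nat (fun i => i <= n /\ In (f i) J)) as [i0 [[Hi0n Hi0J] Hmin]].
    { exists n. split; auto. destruct Hf as [_ [_ Hn]]. rewrite Hn, EJ. left; auto. }
    destruct i0 as [|i1].
    { exfalso. destruct Hf as [_ [H0 _]]. rewrite H0 in Hi0J. apply (HJ v); auto. }
    assert (Hav : avoid G J i1 f).
    { intros i Hi HiJ. specialize (Hmin i (conj (ltac:(lia) : i <= n) HiJ)). lia. }
    assert (Hpre := wk_prefix G S0 v j n f i1 Hf ltac:(lia)).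
    assert (Wu : W (f i1)).
    { destruct Hpre as [Hp [H0 _]]. apply (along G S0 J W i1 f Hc Hp); auto. congruence. }
    apply in_flat_map. exists (f i1). split.
    + apply in_flat_map. exists (f (S i1)). split; auto. apply nbrs_adj. apply cadj_sym.
      destruct Hf as [Hp _]. apply Hp. lia.
    + apply HLf; auto. exists i1, (fun i => f (i1 - i)). split.
      * apply (wk_rev G S0 v (f i1) i1 f Hpre).
      * intros i Hi. rewrite <- EJ. apply Hav. lia.
Qed.

End FinReg.

Lemma inside_app {G : group} (R : G -> Prop) n m f g : inside G R n f -> inside G R m g ->
  inside G R (n + m) (fun i => if i <=? n then f i else g (i - n)).
Proof. intros Hf Hg i Hi. destruct (Nat.leb_spec i n). apply Hf; auto. apply Hg; lia. Qed.

Lemma inside_rev {G : group} (R : G -> Prop) n f : inside G R n f -> inside G R n (fun i => f (n - i)).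
Proof. intros Hf i Hi. apply Hf. lia. Qed.

Lemma avoid_inside {G : group} K n f : avoid G K n f <-> inside G (fun v => ~ In v K) n f.
Proof. unfold avoid, inside. tauto. Qed.

Section Sides.
Variable G : group.
Variable S0 : list G.
Local Infix "**" := (@gmul G) (at level 40, left associativity).
Local Notation adj := (cayley_adj S0).
Hypothesis gen : generates S0.
Variables ra rb : nat -> G.
Hypothesis Hra : is_ray adj ra.
Hypothesis Hrb : is_ray adj rb.
Hypothesis Hall : forall r, is_ray adj r -> rays_equiv G adj r ra \/ rays_equiv G adj r rb.
Variable K : list G.
Variable k0 : G.
Hypothesis Hk0 : In k0 K.
Hypothesis Kconn : forall k, In k K -> exists n f, wk G S0 k0 k n f /\ inside G (fun v => In v K) n f.
Hypothesis Ksep : sepby G S0 ra rb K.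

Local Notation Sa := (Side G S0 K ra).
Local Notation Sb := (Side G S0 K rb).

Lemma sides_disj v : Sa v -> Sb v -> False.
Proof.
  intros [n1 [f1 [m1 [Hf1 Ha1]]]] [n2 [f2 [m2 [Hf2 Ha2]]]].
  pose proof (wk_app G S0 _ _ _ _ _ _ _ (wk_rev G S0 _ _ _ _ Hf1) Hf2) as Hw.
  destruct (Ksep (n1 + n2, fun i => if i <=? n1 then f1 (n1 - i) else f2 (i - n1))) as [a [Ha Hin]].
  - destruct Hw as [Hp [H0 Hn]]. split; [exact Hp|split].
    + exists m1. exact H0.
    + exists m2. exact Hn.
  - simpl in *. destruct (Nat.leb_spec a n1).
    + apply (Ha1 (n1 - a)); auto. lia.
    + apply (Ha2 (a - n1)); auto. lia.
Qed.

Lemma sides_tail : exists N, forall n, N <= n -> Sa (ra n) /\ Sb (rb n).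
Proof.
  destruct (tail_avoid G S0 ra Hra K) as [N1 H1].
  destruct (tail_avoid G S0 rb Hrb K) as [N2 H2].
  exists (Nat.max N1 N2). intros n Hn. split; apply Side_tail; [apply H1|apply H2]; lia.
Qed.

Lemma not_ray_sep r F1 F2 : is_ray adj r -> sepby G S0 r ra F1 -> sepby G S0 r rb F2 -> False.
Proof.
  intros Hr H1 H2. destruct (Hall r Hr) as [E|E].
  - exact (noteq G S0 _ _ _ H1 E).
  - exact (noteq G S0 _ _ _ H2 E).
Qed.

Lemma sep_out_a N r : (forall n, N <= n -> Sa (ra n)) -> (forall a, ~ Sa (r a)) ->
  sepby G S0 r ra (K ++ [] ++ map ra (seq 0 N)).
Proof.
  intros HN Hr. apply (sep_gen G S0 K (fun v => ~ Sa v)).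
  - apply Wcl_compl. apply Side_cl.
  - intro a. left. auto.
  - intro b. destruct (Nat.le_gt_cases N b). left. intro H'. apply H'. auto.
    right. apply prefix_in. auto.
Qed.

Lemma sep_out_b N r : (forall n, N <= n -> Sb (rb n)) -> (forall a, ~ Sb (r a)) ->
  sepby G S0 r rb (K ++ [] ++ map rb (seq 0 N)).
Proof.
  intros HN Hr. apply (sep_gen G S0 K (fun v => ~ Sb v)).
  - apply Wcl_compl. apply Side_cl.
  - intro a. left. auto.
  - intro b. destruct (Nat.le_gt_cases N b). left. intro H'. apply H'. auto.
    right. apply prefix_in. auto.
Qed.

Lemma M_fin : exists LM, forall v, ~ Sa v -> ~ Sb v -> In v LM.
Proof.
  destruct sides_tail as [N HN].
  destruct (finreg G S0 gen (ex_intro _ ra Hra) K (fun v => ~ In v K /\ ~ Sa v /\ ~ Sb v)) as [L HL].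
  - intros v w [H1 [H2 H3]] HvK Hvw HwK. split; auto. split.
    + intro Hw. apply H2. apply (Side_cl G S0 K ra w v); auto. apply cadj_sym; auto.
    + intro Hw. apply H3. apply (Side_cl G S0 K rb w v); auto. apply cadj_sym; auto.
  - intros v [H _]; auto.
  - intros r Hr Hin. apply (not_ray_sep r _ _ Hr (sep_out_a N r (fun n Hn => proj1 (HN n Hn)) (fun a => proj1 (proj2 (Hin a))))
                                   (sep_out_b N r (fun n Hn => proj2 (HN n Hn)) (fun a => proj2 (proj2 (Hin a))))).
  - exists (K ++ L). intros v H1 H2. apply in_or_app. destruct (classic (In v K)); auto.
Qed.

Lemma nSa_conn v : ~ Sa v -> exists n f, wk G S0 v k0 n f /\ inside G (fun x => ~ Sa x) n f.
Proof.
  intro Hv.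
  assert (HK : forall k, In k K -> exists n f, wk G S0 k k0 n f /\ inside G (fun x => ~ Sa x) n f).
  { intros k Hk. destruct (Kconn k Hk) as [n [f [Hf Hi]]]. exists n. eexists. split.
    apply (wk_rev G S0 _ _ _ _ Hf). intros i Hi'. intro HS. apply (Side_notK G S0 K ra _ HS). apply Hi. lia. }
  destruct (classic (In v K)) as [HvK|HvK]; [apply HK; auto|].
  destruct (connected G S0 gen v k0) as [n [f Hf]].
  destruct (ex_min_nat (fun i => i <= n /\ In (f i) K)) as [i0 [[Hi0n Hi0K] Hmin]].
  { exists n. split; auto. destruct Hf as [_ [_ Hn]]. rewrite Hn. auto. }
  destruct (HK _ Hi0K) as [m [g [Hg Hgi]]].
  pose proof (wk_prefix G S0 _ _ _ _ _ Hf Hi0n) as Hpre.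
  exists (i0 + m). eexists. split. eapply wk_app; eauto.
  apply inside_app; auto.
  intros i Hi HS. destruct (Nat.eq_dec i i0) as [->|Hne].
  - apply (Side_notK G S0 K ra _ HS). auto.
  - apply Hv. assert (Hpi := wk_prefix G S0 _ _ _ _ _ Hf (ltac:(lia) : i <= n)).
    destruct (wk_rev G S0 _ _ _ _ Hpi) as [Hrp [Hr0 Hrn]]. rewrite <- Hrn.
    apply (along G S0 K Sa i _ (Side_cl G S0 K ra) Hrp). rewrite Hr0. auto.
    intros j Hj HjK. assert (i - j <= n) by lia. specialize (Hmin (i - j) (conj H HjK)). lia.
Qed.

Lemma choose_x : exists x, forall k, In k K -> Sa (k ** x).
Proof.
  destruct sides_tail as [N HN].
  set (Fb := flat_map (fun k => map (fun k' => k0 ** ginv k ** k') K) K).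
  destruct (tail_avoid G S0 ra Hra Fb) as [N1 HN1].
  set (n := Nat.max N N1).
  exists (ginv k0 ** ra n). intros k Hk.
  destruct (Kconn k Hk) as [m [f [Hf Hi]]].
  pose proof (wk_trans G S0 _ _ _ _ (ginv k0 ** ra n) Hf) as Hf'.
  destruct Hf' as [Hp [H0 Hm]]. rewrite <- Hm.
  apply (along G S0 K Sa m _ (Side_cl G S0 K ra) Hp).
  - rewrite H0, gmulA, gmulV_r, gmul1. apply HN. lia.
  - intros i Hii Hin. apply (HN1 n); [lia|]. apply in_flat_map. exists (f i). split; [apply Hi; auto|].
    apply in_map_iff. exists (f i ** (ginv k0 ** ra n)). split; auto.
    cbv beta. rewrite !gmulA, gmulVK, gmulV_r, gmul1. reflexivity.
Qed.

Section WithX.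
Variable x : G.
Hypothesis Hx : forall k, In k K -> Sa (k ** x).

Lemma propag (W : G -> Prop) : Wcl G S0 K W -> forall v, ~ Sa v ->
  (W (k0 ** ginv x) <-> W (v ** ginv x)).
Proof.
  intros Hc v Hv. destruct (nSa_conn v Hv) as [n [f [Hf Hi]]].
  assert (Hc' := Wcl_trans G S0 K W x Hc).
  assert (Hav : avoid G (map (fun k => k ** x) K) n f).
  { intros i Hii Hin. apply in_map_iff in Hin. destruct Hin as [k [Ek Hk]].
    apply (Hi i Hii). rewrite <- Ek. apply Hx; auto. }
  split; intro H.
  - pose proof (wk_rev G S0 _ _ _ _ Hf) as [Hp [H0 Hn]]. rewrite <- Hn.
    apply (along G S0 _ (fun v => W (v ** ginv x)) n _ Hc' Hp). rewrite H0; auto.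
    intros i Hii. apply Hav. lia.
  - destruct Hf as [Hp [H0 Hn]]. rewrite <- Hn.
    apply (along G S0 _ (fun v => W (v ** ginv x)) n _ Hc' Hp). rewrite H0; auto. auto.
Qed.

Lemma trich : (forall v, ~ Sa v -> Sb (v ** ginv x)) \/ (forall v, ~ Sa v -> Sa (v ** ginv x)).
Proof.
  destruct (classic (Sb (k0 ** ginv x))) as [H|H].
  { left. intros v Hv. apply (propag _ (Side_cl G S0 K rb) v Hv). auto. }
  destruct (classic (Sa (k0 ** ginv x))) as [H'|H'].
  { right. intros v Hv. apply (propag _ (Side_cl G S0 K ra) v Hv). auto. }
  exfalso. destruct M_fin as [LM HLM]. destruct sides_tail as [N HN].
  apply (ray_not_fin G S0 rb N (map (fun y => y ** x) LM) Hrb). intros n Hn.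
  assert (Hv : ~ Sa (rb n)) by (intro Hs; apply (sides_disj (rb n)); auto; apply HN; auto).
  apply in_map_iff. exists (rb n ** ginv x). split; [apply gmulVK|]. apply HLM.
  - rewrite <- (propag _ (Side_cl G S0 K ra) _ Hv). auto.
  - rewrite <- (propag _ (Side_cl G S0 K rb) _ Hv). auto.
Qed.
End WithX.

End Sides.

Lemma Wcl_ext {G : group} S0 K (W W' : G -> Prop) : (forall v, W v <-> W' v) -> Wcl G S0 K W -> Wcl G S0 K W'.
Proof. intros E H v w Hv HvK Hvw HwK. apply E. apply (H v w); auto. apply E; auto. Qed.

Lemma Wcl_and {G : group} S0 K (W W' : G -> Prop) : Wcl G S0 K W -> Wcl G S0 K W' -> Wcl G S0 K (fun v => W v /\ W' v).
Proof. intros H H' v w [Hv Hv'] HvK Hvw HwK. split; [apply (H v w)|apply (H' v w)]; auto. Qed.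

Lemma Z_step (P : Z -> Prop) : forall d a, P a -> ~ P (a + Z.of_nat d)%Z -> exists m, P m /\ ~ P (m + 1)%Z.
Proof.
  induction d as [|d IH]; intros a Ha Hb.
  - exfalso. apply Hb. rewrite Z.add_0_r. auto.
  - destruct (classic (P (a + Z.of_nat d)%Z)) as [H|H].
    + exists (a + Z.of_nat d)%Z. split; auto. replace (a + Z.of_nat d + 1)%Z with (a + Z.of_nat (S d))%Z by lia. auto.
    + apply (IH a); auto.
Qed.

Section Core.
Variable G : group.
Variable S0 : list G.
Local Infix "**" := (@gmul G) (at level 40, left associativity).
Local Notation adj := (cayley_adj S0).
Hypothesis gen : generates S0.
Variables ra rb : nat -> G.
Hypothesis Hra : is_ray adj ra.
Hypothesis Hrb : is_ray adj rb.
Hypothesis Hall : forall r, is_ray adj r -> rays_equiv G adj r ra \/ rays_equiv G adj r rb.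
Variable K : list G.
Variable k0 : G.
Hypothesis Hk0 : In k0 K.
Hypothesis Kconn : forall k, In k K -> exists n f, wk G S0 k0 k n f /\ inside G (fun v => In v K) n f.
Hypothesis Ksep : sepby G S0 ra rb K.

Local Notation Sa := (Side G S0 K ra).
Local Notation Sb := (Side G S0 K rb).

Variable z : G.
Hypothesis Tr : forall v, ~ Sa v -> Sb (v ** ginv z).

Local Open Scope Z_scope.

Definition Um (m : Z) (v : G) : Prop := Sa (v ** zpow G z (- m)).
Definition Kz (m : Z) : list G := map (fun k => k ** zpow G z m) K.

Lemma disjab v : Sa v -> Sb v -> False.
Proof. apply (sides_disj G S0 ra rb K Ksep). Qed.

Lemma Uz u : Sa u -> Sa (u ** z).
Proof. intro H. apply NNPP. intro H'. apply (disjab u); auto. rewrite <- (gmulKV G u z). apply Tr; auto. Qed.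

Lemma KzSa k : In k K -> Sa (k ** z).
Proof. intro H. apply NNPP. intro H'. apply (Side_notK G S0 K rb k); auto. rewrite <- (gmulKV G k z). apply Tr; auto. Qed.

Lemma Um_shift m j g : Um (m + j) (g ** zpow G z j) <-> Um m g.
Proof. unfold Um. rewrite zpow_comb. replace (j + - (m + j)) with (- m) by lia. tauto. Qed.

Lemma Um_succ m v : Um (m + 1) v -> Um m v.
Proof.
  unfold Um. intro H. apply Uz in H. rewrite <- gmulA, <- zpow_succ in H.
  replace (- (m + 1) + 1) with (- m) in H by lia. auto.
Qed.

Lemma Um_mono m m' v : m <= m' -> Um m' v -> Um m v.
Proof.
  intro Hm. replace m' with (m + Z.of_nat (Z.to_nat (m' - m))) by lia.
  generalize (Z.to_nat (m' - m)). intro d. induction d as [|d IH]; intro H.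
  - rewrite Z.add_0_r in H. auto.
  - apply IH. apply Um_succ. replace (m + Z.of_nat d + 1) with (m + Z.of_nat (S d)) by lia. auto.
Qed.

Lemma Um_cl m : Wcl G S0 (Kz m) (Um m).
Proof.
  apply (Wcl_ext S0 _ (fun v => Sa (v ** ginv (zpow G z m)))).
  - intro v. unfold Um. rewrite zpow_opp. tauto.
  - apply Wcl_trans. apply Side_cl.
Qed.

Lemma Um_notKz m v : Um m v -> ~ In v (Kz m).
Proof.
  intros H Hin. unfold Kz in Hin. apply in_map_iff in Hin. destruct Hin as [k [<- Hk]].
  unfold Um in H. rewrite zpow_cancel in H. apply (Side_notK G S0 K ra k); auto.
Qed.

Lemma Kz_disj i j y : i < j -> In y (Kz i) -> In y (Kz j) -> False.
Proof.
  intros Hij Hi Hj. unfold Kz in *. apply in_map_iff in Hi, Hj.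
  destruct Hi as [k [Ek Hk]]. destruct Hj as [k' [Ek' Hk']].
  assert (E : k = k' ** zpow G z (j - i)).
  { rewrite <- (zpow_cancel G k z i), Ek, <- Ek', zpow_comb. try (f_equal; f_equal; lia). }
  assert (HU : Um (j - i - 1) k).
  { unfold Um. rewrite E, zpow_comb. replace (j - i + - (j - i - 1)) with 1 by lia.
    rewrite zpow_1. apply KzSa; auto. }
  apply (Um_mono 0) in HU; [|lia]. unfold Um in HU. simpl in HU. rewrite gmul1_r in HU.
  apply (Side_notK G S0 K ra k); auto.
Qed.

Lemma Um_k0 m : 0 <= m -> ~ Um m k0.
Proof.
  intros Hm H. apply (Um_mono 0) in H; auto. unfold Um in H. simpl in H. rewrite gmul1_r in H.
  apply (Side_notK G S0 K ra k0); auto.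
Qed.

Lemma not_all_Um v : exists m, ~ Um m v.
Proof.
  apply NNPP. intro Hno.
  assert (Hall' : forall m, Um m v) by (intro m; apply NNPP; intro H; apply Hno; eauto).
  destruct (connected G S0 gen v k0) as [n [f [Hp [H0 Hn]]]].
  destruct (php_ex (fun i y => In y (Kz (Z.of_nat i))) (map f (seq 0 (S n)))) as [i [j [y [Hij [Hi Hj]]]]].
  - intro i. destruct (cross G S0 (Kz (Z.of_nat i)) (Um (Z.of_nat i)) n f (Um_cl _) Hp) as [a [Ha Hin]].
    + rewrite H0. auto.
    + rewrite Hn. apply Um_k0. lia.
    + exists (f a). split; auto. apply in_map. apply in_seq. lia.
  - apply (Kz_disj (Z.of_nat i) (Z.of_nat j) y); auto. lia.
Qed.

Lemma some_Um v : exists m, Um m v.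
Proof.
  apply NNPP. intro Hno.
  assert (Hall' : forall m, ~ Um m v) by (intros m H; apply Hno; eauto).
  destruct (sides_tail G S0 ra rb Hra Hrb K) as [N HN].
  destruct (connected G S0 gen v (ra N)) as [n [f [Hp [H0 Hn]]]].
  destruct (php_ex (fun i y => In y (Kz (- Z.of_nat i))) (map f (seq 0 (S n)))) as [i [j [y [Hij [Hi Hj]]]]].
  - intro i. destruct (cross G S0 (Kz (- Z.of_nat i)) (fun v => ~ Um (- Z.of_nat i) v) n f (Wcl_compl _ _ _ _ (Um_cl _)) Hp) as [a [Ha Hin]].
    + rewrite H0. auto.
    + rewrite Hn. intro H. apply H. apply (Um_mono _ 0). lia. unfold Um. simpl. rewrite gmul1_r. apply HN. lia.
    + exists (f a). split; auto. apply in_map. apply in_seq. lia.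
  - apply (Kz_disj (- Z.of_nat j) (- Z.of_nat i) y); auto. lia.
Qed.

Definition Lev v m := Um m v /\ ~ Um (m + 1) v.

Lemma Lev_ex v : exists m, Lev v m.
Proof.
  destruct (some_Um v) as [a Ha]. destruct (not_all_Um v) as [b Hb].
  assert (a < b). { destruct (Z.lt_ge_cases a b); auto. exfalso. apply Hb. apply (Um_mono _ a); auto. }
  apply (Z_step (fun m => Um m v) (Z.to_nat (b - a)) a); auto.
  replace (a + Z.of_nat (Z.to_nat (b - a))) with b by lia. auto.
Qed.

Lemma Lev_unique v m m' : Lev v m -> Lev v m' -> m = m'.
Proof.
  intros [H1 H2] [H3 H4]. destruct (Z.lt_trichotomy m m') as [H|[H|H]]; auto.
  - exfalso. apply H2. apply (Um_mono _ m'); auto. lia.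
  - exfalso. apply H4. apply (Um_mono _ m); auto. lia.
Qed.

Definition lev (v : G) : Z := proj1_sig (constructive_indefinite_description _ (Lev_ex v)).
Lemma lev_spec v : Lev v (lev v).
Proof. exact (proj2_sig (constructive_indefinite_description _ (Lev_ex v))). Qed.

Lemma lev_eq v m : Lev v m -> lev v = m.
Proof. intro H. apply (Lev_unique v); auto. apply lev_spec. Qed.

Lemma lev_ge v j : Um j v -> j <= lev v.
Proof.
  intro H. destruct (lev_spec v) as [_ H2]. destruct (Z.le_gt_cases j (lev v)); auto.
  exfalso. apply H2. apply (Um_mono _ j); auto. lia.
Qed.

Lemma lev_shift g j : lev (g ** zpow G z j) = lev g + j.
Proof.
  apply lev_eq. destruct (lev_spec g) as [H1 H2]. split.
  - apply Um_shift. auto.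
  - replace (lev g + j + 1) with ((lev g + 1) + j) by lia. rewrite Um_shift. auto.
Qed.

Lemma lev_adj v w : adj v w -> lev v - 1 <= lev w.
Proof.
  intro Hvw. destruct (lev_spec v) as [H1 _]. set (m := lev v) in *.
  destruct (classic (Um m w)) as [Hw|Hw].
  - apply lev_ge in Hw. lia.
  - destruct (cross G S0 (Kz m) (Um m) 1 _ (Um_cl m) (proj1 (wk_one G S0 v w Hvw))) as [a [Ha Hin]].
    + simpl. auto.
    + simpl. auto.
    + destruct a as [|a]; simpl in Hin.
      * exfalso. exact (Um_notKz m v H1 Hin).
      * assert (a = 0)%nat by lia. subst a. simpl in Hin.
        unfold Kz in Hin. apply in_map_iff in Hin. destruct Hin as [k [<- Hk]].
        apply (Z.le_trans _ (m - 1)); [lia|]. apply lev_ge. unfold Um. rewrite zpow_comb.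
        replace (m + - (m - 1)) with 1 by lia. rewrite zpow_1. apply KzSa; auto.
Qed.

Lemma ray_trans r y : is_ray adj r -> is_ray adj (fun n => r n ** y).
Proof.
  intros [Hi Ha]. split.
  - intros m n E. apply Hi. apply (gcancel_r G y). auto.
  - intro n. apply cadj_trans_iff. apply Ha.
Qed.

Lemma ra_tail_z : exists N', forall n, (N' <= n)%nat -> ~ Sb (ra n ** ginv z).
Proof.
  destruct (sides_tail G S0 ra rb Hra Hrb K) as [N HN].
  destruct (M_fin G S0 gen ra rb Hra Hrb Hall K) as [LM HLM].
  set (raz := fun n => ra n ** z).
  assert (Hraz : is_ray adj raz) by (apply ray_trans; auto).
  assert (Heq : rays_equiv G adj raz ra).
  { destruct (Hall raz Hraz) as [E|E]; auto. exfalso.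
    refine (noteq G S0 raz rb _ (sep_gen G S0 K Sa raz rb (map raz (seq 0 N)) (map rb (seq 0 N)) (Side_cl G S0 K ra) _ _) E).
    - intro a. destruct (Nat.le_gt_cases N a). left. apply Uz. apply HN; auto. right. apply prefix_in; auto.
    - intro b. destruct (Nat.le_gt_cases N b). left. intro H'. apply (disjab (rb b)); auto. apply HN; auto.
      right. apply prefix_in; auto. }
  set (Kz1 := map (fun k => k ** z) K).
  destruct (tail_avoid G S0 ra Hra Kz1) as [N1 HN1].
  set (N' := Nat.max N N1).
  assert (Hcz : forall W, Wcl G S0 K W -> forall n, (N' <= n)%nat -> (W (ra N' ** ginv z) <-> W (ra n ** ginv z))).
  { intros W HW n Hn. assert (Hc := Wcl_trans G S0 K W z HW). fold Kz1 in Hc.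
    set (f := fun i => ra (N' + i)%nat).
    assert (Hp : is_path G adj (n - N') f).
    { intros i Hi. unfold f. replace (N' + S i)%nat with (S (N' + i)) by lia. apply Hra. }
    assert (Hav : avoid G Kz1 (n - N') f).
    { intros i Hi. unfold f. apply HN1. lia. }
    assert (Ef0 : f 0%nat = ra N') by (unfold f; f_equal; lia).
    assert (Efn : f (n - N')%nat = ra n) by (unfold f; f_equal; lia).
    split; intro H.
    - rewrite <- Efn. apply (along G S0 Kz1 (fun v => W (v ** ginv z)) _ f Hc Hp); auto. rewrite Ef0. auto.
    - destruct (wk_rev G S0 _ _ _ f (conj Hp (conj Ef0 Efn))) as [Hp' [H0' Hn']].
      rewrite <- Hn'. apply (along G S0 Kz1 (fun v => W (v ** ginv z)) _ _ Hc Hp'). rewrite H0'. auto.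
      intros i Hi. apply Hav. lia. }
  exists N'.
  destruct (classic (Sa (ra N' ** ginv z))) as [HA|HA].
  { intros n Hn HB. apply (disjab (ra n ** ginv z)); auto. apply (Hcz _ (Side_cl G S0 K ra) n Hn). auto. }
  destruct (classic (Sb (ra N' ** ginv z))) as [HB|HB].
  - exfalso.
    refine (noteq G S0 raz ra _ (sep_gen G S0 Kz1 (fun v => Sa (v ** ginv z)) raz ra (map raz (seq 0 N)) (map ra (seq 0 N')) (Wcl_trans G S0 K Sa z (Side_cl G S0 K ra)) _ _) Heq).
    + intro a. destruct (Nat.le_gt_cases N a). left. unfold raz. rewrite gmulKV. apply HN; auto. right. apply prefix_in; auto.
    + intro b. destruct (Nat.le_gt_cases N' b). left. intro H'. apply (disjab (ra b ** ginv z)); auto.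
      apply (Hcz _ (Side_cl G S0 K rb) b); auto. right. apply prefix_in; auto.
  - exfalso. apply (ray_not_fin G S0 ra N' (map (fun y => y ** z) LM) Hra). intros n Hn.
    apply in_map_iff. exists (ra n ** ginv z). split; [apply gmulVK|]. apply HLM.
    + rewrite <- (Hcz _ (Side_cl G S0 K ra) n Hn). auto.
    + rewrite <- (Hcz _ (Side_cl G S0 K rb) n Hn). auto.
Qed.

Lemma lev0_fin : exists LD, forall u, Lev u 0 -> In u LD.
Proof.
  destruct (sides_tail G S0 ra rb Hra Hrb K) as [N HN].
  destruct (M_fin G S0 gen ra rb Hra Hrb Hall K) as [LM HLM].
  destruct ra_tail_z as [N' HN'].
  set (Kz1 := map (fun k => k ** z) K).
  destruct (finreg G S0 gen (ex_intro _ ra Hra) (K ++ Kz1) (fun u => Sa u /\ Sb (u ** ginv z))) as [LR HLR].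
  - apply Wcl_and.
    + apply (Wcl_mono G S0 K). intros y Hy; apply in_or_app; auto. apply Side_cl.
    + apply (Wcl_mono G S0 Kz1). intros y Hy; apply in_or_app; auto. apply Wcl_trans. apply Side_cl.
  - intros v [H1 H2] Hin. apply in_app_or in Hin. destruct Hin as [Hin|Hin].
    + apply (Side_notK G S0 K ra v); auto.
    + apply (Side_notK G S0 K rb _ H2). unfold Kz1 in Hin. apply in_map_iff in Hin.
      destruct Hin as [k [<- Hk]]. rewrite gmulKV. auto.
  - intros r Hr Hin.
    apply (not_ray_sep G S0 ra rb Hall r (Kz1 ++ [] ++ map ra (seq 0 N')) (K ++ [] ++ map rb (seq 0 N)) Hr).
    + apply (sep_gen G S0 Kz1 (fun v => Sb (v ** ginv z))). apply Wcl_trans. apply Side_cl.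
      * intro a. left. apply Hin.
      * intro b. destruct (Nat.le_gt_cases N' b). left. apply HN'; auto. right. apply prefix_in; auto.
    + apply (sep_gen G S0 K Sa). apply Side_cl.
      * intro a. left. apply Hin.
      * intro b. destruct (Nat.le_gt_cases N b). left. intro H'. apply (disjab (rb b)); auto. apply HN; auto.
        right. apply prefix_in; auto.
  - exists (map (fun y => y ** z) LM ++ LR). intros u [H1 H2]. apply in_or_app.
    unfold Um in H1, H2. simpl in H1. rewrite gmul1_r in H1.
    replace (zpow G z (- (0 + 1))) with (ginv z) in H2 by (rewrite zpow_opp, zpow_1; reflexivity).
    destruct (classic (Sb (u ** ginv z))) as [HB|HB].
    + right. apply HLR. auto.
    + left. apply in_map_iff. exists (u ** ginv z). split; [apply gmulVK|]. apply HLM; auto.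
Qed.

Lemma lev_window : forall (a : Z) (W : nat), exists Sig : list G,
    forall g, a <= lev g < a + Z.of_nat W -> In g Sig.
Proof.
  intros a W. destruct lev0_fin as [LD HLD].
  exists (flat_map (fun i => map (fun y => y ** zpow G z (a + Z.of_nat i)) LD) (seq 0 W)).
  intros g Hg. apply in_flat_map. exists (Z.to_nat (lev g - a)). split.
  - apply in_seq. lia.
  - apply in_map_iff. exists (g ** zpow G z (- lev g)). split.
    + rewrite zpow_comb. replace (- lev g + (a + Z.of_nat (Z.to_nat (lev g - a)))) with 0 by lia.
      rewrite zpow0, gmul1_r. reflexivity.
    + apply HLD. pose proof (lev_spec (g ** zpow G z (- lev g))) as H. rewrite lev_shift in H.
      replace (lev g + - lev g) with 0 in H by lia. exact H.
Qed.

Lemma core_result : exists lv : G -> Z,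
  (forall g j, lv (g ** zpow G z j) = lv g + j) /\
  (forall v w, adj v w -> lv v - 1 <= lv w) /\
  (forall (a : Z) (W : nat), exists Sig : list G, forall g, a <= lv g < a + Z.of_nat W -> In g Sig).
Proof. exists lev. split; [exact lev_shift|split; [exact lev_adj|exact lev_window]]. Qed.

End Core.

Section Final.
Variable G : group.
Local Infix "**" := (@gmul G) (at level 40, left associativity).

Lemma sepby_mono S0 r r' F F' : incl F F' -> sepby G S0 r r' F -> sepby G S0 r r' F'.
Proof. intros Hi H p Hp. destruct (H p Hp) as [a [Ha Hin]]. eauto. Qed.

Lemma words_bound S0 : generates S0 -> forall l : list G, exists C, forall x, In x l ->
  exists w, (forall y, In y w -> in_symm S0 y) /\ word_prod w = x /\ length w <= C.
Proof.
  intros gen l. induction l as [|a l [C HC]].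
  - exists 0. intros x [].
  - destruct (gen a) as [w [Hw1 Hw2]]. exists (Nat.max C (length w)). intros x [<-|Hx].
    + exists w. split; auto. split; auto. lia.
    + destruct (HC x Hx) as [w' [H1 [H2 H3]]]. exists w'. split; auto. split; auto. lia.
Qed.

Lemma level_to_coloring (S0 S : list G) : generates S0 -> ~ In gone S ->
  forall (z : G) (lv : G -> Z),
  (forall g j, lv (g ** zpow G z j) = (lv g + j)%Z) ->
  (forall v w, cayley_adj S0 v w -> (lv v - 1 <= lv w)%Z) ->
  (forall (a : Z) (W : nat), exists Sig : list G, forall g, (a <= lv g < a + Z.of_nat W)%Z -> In g Sig) ->
  exists k, is_chromatic_number (cayley_adj S) k /\
    exists c : G -> nat, proper_coloring (cayley_adj S) k c /\ periodic_coloring (cayley_adj S) c.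
Proof.
  intros gen noid z lv L1 Ladj L3.
  destruct (words_bound S0 gen (S ++ map ginv S)) as [C HC].
  apply (coloring_conclusion G S noid z lv C L1); auto.
  intros g h Hgh.
  assert (Hx : In (h ** ginv g) (S ++ map ginv S)).
  { destruct Hgh as [H|H]; apply in_or_app; [left; auto|right].
    apply in_map_iff. exists (ginv (h ** ginv g)). split; auto. apply ginv_inv. }
  destruct (HC _ Hx) as [w [Hw1 [Hw2 Hw3]]].
  assert (Hwp : forall w, (forall y, In y w -> in_symm S0 y) -> forall g, (lv (word_prod w ** g) <= lv g + Z.of_nat (length w))%Z).
  { induction w0 as [|s w0 IH]; intros Hy g0.
    - simpl. rewrite gmul1. lia.
    - change (word_prod (s :: w0)) with (s ** word_prod w0).
      assert (Ha : cayley_adj S0 (s ** word_prod w0 ** g0) (word_prod w0 ** g0)).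
      { apply cadj_sym. unfold cayley_adj. rewrite ginv_mul, gmulA, !gmulKV. apply Hy. left; auto. }
      pose proof (Ladj _ _ Ha). rewrite <- gmulA in H. specialize (IH (fun y Hy' => Hy y (or_intror Hy')) g0).
      simpl length. rewrite <- gmulA. lia. }
  pose proof (Hwp w Hw1 g) as H. rewrite Hw2, gmulVK in H. lia.
Qed.

End Final.

Theorem theorem5p2 (Gam : group) (S : list Gam) :
  group_two_ended Gam ->
  generates S ->
  ~ In gone S ->
  exists k, is_chromatic_number (cayley_adj S) k /\
    exists c : Gam -> nat,
      proper_coloring (cayley_adj S) k c /\ periodic_coloring (cayley_adj S) c.
Proof.
  intros [S0 [gen [r1 [r2 [Hr1 [Hr2 [Hne Hall]]]]]]] _ noid.
  set (G := Gam).
  destruct (sep_of_noteq G S0 r1 r2 Hne) as [F HF].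
  set (k0 := r1 0).
  assert (Hp : forall y, exists p : nat * (nat -> G), wk G S0 k0 y (fst p) (snd p)).
  { intro y. destruct (connected G S0 gen k0 y) as [n [f H]]. exists (n, f). exact H. }
  set (pth := fun y => proj1_sig (constructive_indefinite_description _ (Hp y))).
  assert (Hpth : forall y, wk G S0 k0 y (fst (pth y)) (snd (pth y))).
  { intro y. exact (proj2_sig (constructive_indefinite_description _ (Hp y))). }
  clearbody pth.
  set (K := k0 :: flat_map (fun y => map (snd (pth y)) (seq 0 (Nat.succ (fst (pth y))))) F).
  assert (Hk0 : In k0 K) by (left; reflexivity).
  assert (Kconn : forall k, In k K -> exists n f, wk G S0 k0 k n f /\ inside G (fun v => In v K) n f).
  { intros k [<-|Hk].
    - exists 0, (fun _ => k0). split. apply wk_nil. intros i _. auto.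
    - apply in_flat_map in Hk. destruct Hk as [y [Hy Hk]]. apply in_map_iff in Hk.
      destruct Hk as [i [<- Hi]]. apply in_seq in Hi. exists i, (snd (pth y)). split.
      + apply (wk_prefix G S0 k0 y (fst (pth y))). apply Hpth. apply Nat.lt_succ_r. apply Hi.
      + intros j Hj. right. apply in_flat_map. exists y. split; auto. apply in_map. apply in_seq. lia. }
  assert (Ksep : sepby G S0 r1 r2 K).
  { apply (sepby_mono G S0 r1 r2 F); auto. intros y Hy. right. apply in_flat_map. exists y. split; auto.
    destruct (Hpth y) as [_ [_ Hn]]. apply in_map_iff. exists (fst (pth y)). split; auto. apply in_seq. split; [apply Nat.le_0_l|simpl; apply Nat.lt_succ_diag_r]. }
  assert (Ksep' : sepby G S0 r2 r1 K) by (apply sep_sym; auto).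
  assert (Hall' : forall r, is_ray (cayley_adj S0) r -> rays_equiv G (cayley_adj S0) r r2 \/ rays_equiv G (cayley_adj S0) r r1).
  { intros r Hr. destruct (Hall r Hr); auto. }
  assert (Fin : forall ra rb, is_ray (cayley_adj S0) ra -> is_ray (cayley_adj S0) rb ->
           (forall r, is_ray (cayley_adj S0) r -> rays_equiv G (cayley_adj S0) r ra \/ rays_equiv G (cayley_adj S0) r rb) ->
           sepby G S0 ra rb K -> forall z,
           (forall v, ~ Side G S0 K ra v -> Side G S0 K rb (gmul v (ginv z))) ->
           exists k, is_chromatic_number (cayley_adj S) k /\
             exists c : G -> nat, proper_coloring (cayley_adj S) k c /\ periodic_coloring (cayley_adj S) c).
  { intros ra rb Hra Hrb Hal Hs z Tr.
    destruct (core_result G S0 gen ra rb Hra Hrb Hal K k0 Hk0 Hs z Tr) as [lv [L1 [L2 L3]]].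
    exact (level_to_coloring G S0 S gen noid z lv L1 L2 L3). }
  destruct (choose_x G S0 r1 r2 Hr1 Hr2 K k0 Kconn) as [x Hx].
  destruct (trich G S0 gen r1 r2 Hr1 Hr2 Hall K k0 Hk0 Kconn Ksep x Hx) as [TA|TB].
  { exact (Fin r1 r2 Hr1 Hr2 Hall Ksep x TA). }
  destruct (choose_x G S0 r2 r1 Hr2 Hr1 K k0 Kconn) as [y Hy].
  destruct (trich G S0 gen r2 r1 Hr2 Hr1 Hall' K k0 Hk0 Kconn Ksep' y Hy) as [TA'|TB'].
  { exact (Fin r2 r1 Hr2 Hr1 Hall' Ksep' y TA'). }
  apply (Fin r1 r2 Hr1 Hr2 Hall Ksep (gmul y x)).
  intros v Hv. rewrite ginv_mul, gmulA. apply TB'. intro H2.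
  apply (sides_disj G S0 r1 r2 K Ksep (gmul v (ginv x))); auto.
Qed.
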